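(* Let $D,\beta,\delta,\alpha\in\mathbb R$ with $(\beta,D)\neq(0,0)$, and let $\lambda\in\mathbb C$ with $\lambda\notin\sigma_{\mathrm{ess}}$, where $$\sigma_{\mathrm{ess}}=\Big\{\lambda\in\mathbb C:\ \lambda=(\delta\pm i\alpha)-s^2\big(\beta\pm i\tfrac D2\big)\ \text{for some } s\in\mathbb R\Big\}$$ (the two $\pm$ signs taken together). Then the matrix $$\mathbf A_\infty(\lambda)=\begin{bmatrix}\mathbf 0&\mathbf I\\ \mathbf B^{-1}(\lambda\mathbf I-\mathbf N_0)&\mathbf 0\end{bmatrix}\in\mathbb C^{4\times4},\qquad \mathbf B=\begin{bmatrix}\beta&-\frac D2\\ \frac D2&\beta\end{bmatrix},\quad \mathbf N_0=\begin{bmatrix}\delta&-\alpha\\ \alpha&\delta\end{bmatrix},$$ has two eigenvalues with positive real part and two eigenvalues with negative real part.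
   Context: Here $\mathbf I$ and $\mathbf 0$ denote the $2\times2$ identity and zero matrices. The set $\sigma_{\mathrm{ess}}$ is the essential spectrum of the operator $\mathbf B\partial_x^2+\mathbf N_0$ obtained as the asymptotic part of the linearization of the cubic-quintic complex Ginzburg–Landau equation about a stationary pulse. *)

(* Defs.v *)
From HB Require Import structures.
From mathcomp Require Import all_boot all_order all_algebra.
From mathcomp Require Import complex.
Set Implicit Arguments. Unset Strict Implicit. Unset Printing Implicit Defensive.
Import Order.TTheory GRing.Theory Num.Theory.
Local Open Scope ring_scope.

Definition mx2 (K : pzRingType) (a b c d : K) : 'M[K]_2 :=
  \matrix_(i < 2, j < 2)
    if (i : nat) == 0%N then (if (j : nat) == 0%N then a else b)
    else (if (j : nat) == 0%N then c else d).

Definition rC (R : rcfType) (x : R) : R[i] := Complex x 0.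

Definition Bmx (R : rcfType) (beta D : R) : 'M[R[i]]_2 :=
  mx2 (rC beta) (rC (- (D / 2))) (rC (D / 2)) (rC beta).

Definition N0mx (R : rcfType) (delta alpha : R) : 'M[R[i]]_2 :=
  mx2 (rC delta) (rC (- alpha)) (rC alpha) (rC delta).

Definition Ainf (R : rcfType) (D beta delta alpha : R) (lam : R[i])
  : 'M[R[i]]_(2 + 2) :=
  block_mx 0 1%:M
    (invmx (Bmx beta D) *m (lam%:M - N0mx delta alpha)) 0.

Definition sigma_ess (R : rcfType) (D beta delta alpha : R) (lam : R[i]) : Prop :=
  exists s : R,
    lam = Complex delta alpha - rC (s ^+ 2) * Complex beta (D / 2)
    \/ lam = Complex delta (- alpha) - rC (s ^+ 2) * Complex beta (- (D / 2)).

(* Main.v *)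
Require Import Defs.
From HB Require Import structures.
From mathcomp Require Import all_boot all_order all_algebra.
From mathcomp Require Import complex ring lra.
Import Order.TTheory GRing.Theory Num.Theory.
Local Open Scope ring_scope.

Lemma det_blk (S : comNzRingType) n (x : S) (P : 'M[S]_n) :
  \det (block_mx x%:M (-1%:M) (-P) x%:M) = \det ((x*x)%:M - P).
Proof.
set C := (x*x)%:M - P.
have E : block_mx 1%:M 0 (-1%:M) 1%:M *m (block_mx 1%:M 1%:M 0 1%:M *m
     (block_mx 1%:M 0 x%:M 1%:M *m (block_mx x%:M (-1%:M) (-P) x%:M *m
      block_mx 1%:M 0 x%:M 1%:M))) = block_mx C (-1%:M) 0 1%:M.
  rewrite !mulmx_block !(mul1mx, mulmx1, mul0mx, mulmx0, addr0, add0r, mulNmx, mulmxN).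
  rewrite -!scalar_mxM /C.
  congr block_mx.
  all: rewrite ?subrr ?addNr ?mulmx0 ?add0r ?addr0 ?opprK ?addNr //.
  by apply/matrixP=> i j; rewrite !mxE addrC.
have := congr1 determinant E.
rewrite !det_mulmx det_ublock det_lblock !det_ublock !det_lblock !det1 !mul1r mulr1.
by rewrite mulr1.
Qed.

Lemma det2 (S : comNzRingType) (A : 'M[S]_2) :
  \det A = A 0 0 * A 1 1 - A 0 1 * A 1 0.
Proof.
rewrite (expand_det_row _ 0) !big_ord_recl big_ord0 /cofactor !det_mx11 !mxE /=.
rewrite addr0 expr0 expr1 mul1r.
have l1 : lift 0 0 = 1 :> 'I_2 by apply: val_inj.
have l2 : lift ord0 ord0 = 1 :> 'I_2 by apply: val_inj.
have l3 : lift (lift ord0 ord0) 0 = 0 :> 'I_2 by apply: val_inj.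
have l4 : ord0 = 0 :> 'I_2 by apply: val_inj.
rewrite ?l3 ?l1 ?l2 ?l4; ring.
Qed.

Lemma step1 (R : rcfType) (D beta delta alpha : R) (lam : R[i]) :
  char_poly (Ainf D beta delta alpha lam) =
  \det (('X * 'X)%:M - map_mx polyC (invmx (Bmx beta D) *m (lam%:M - N0mx delta alpha))).
Proof.
rewrite /char_poly /char_poly_mx /Ainf map_block_mx map_mx0 map_mx1.
rewrite (scalar_mx_block 2 2) opp_block_mx add_block_mx !oppr0 !addr0 !add0r.
by rewrite det_blk.
Qed.
Lemma cE (R : rcfType) (x y : R) : Complex x y = rC x + 'i%C * rC y.
Proof. by rewrite /rC; apply/eqP; rewrite eq_complex /= !mul0r !mulr0 !mul1r !subr0 !addr0 !add0r !eqxx. Qed.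
Lemma rCN (R : rcfType) (x : R) : rC (- x) = - rC x.
Proof. by rewrite /rC; apply/eqP; rewrite eq_complex /= oppr0 !eqxx. Qed.

Lemma step2 (R : rcfType) (D beta delta alpha : R) (lam : R[i]) :
  Bmx beta D \in unitmx ->
  (\det (Bmx beta D))%:P * \det (('X * 'X)%:M - map_mx polyC (invmx (Bmx beta D) *m (lam%:M - N0mx delta alpha)))
  = ((Complex beta (D/2))%:P * ('X * 'X) - (lam - Complex delta alpha)%:P) *
    ((Complex beta (-(D/2)))%:P * ('X * 'X) - (lam - Complex delta (-alpha))%:P).
Proof.
move=> Bu.
rewrite -det_map_mx -det_mulmx mulmxBr map_mxM mulmxA -map_mxM mulmxV // map_mx1 mul1mx.
rewrite mul_mx_scalar det2 /Bmx /mx2 !mxE /= mulr1n mulr0n !sub0r.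
rewrite (@cE _ beta (D/2)) (@cE _ beta (-(D/2))) (@cE _ delta alpha) (@cE _ delta (-alpha)) !rCN.
rewrite !(rmorphB, rmorphD, rmorphN, rmorphM) /=.
have Hi : ('i%C)%:P * ('i%C)%:P = -1 :> {poly R[i]}.
  by rewrite -rmorphM -expr2 sqr_i rmorphN rmorph1.
move: Hi; set pi := ('i%C)%:P; set x := 'X * 'X.
move=> Hi.
apply/eqP; rewrite -subr_eq0; apply/eqP.
transitivity ((pi*pi+1) * ((rC (D/2))%:P * x + (rC alpha)%:P)^+2); first ring.
by rewrite Hi addNr mul0r.
Qed.
Lemma sq (C : numClosedFieldType) (m : C) :
  (forall t : C, t \is Num.real -> m != - t^+2) ->
  exists r : C, r ^+ 2 = m /\ 0 < 'Re r.
Proof.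
move=> hm.
have hr := sqrtCK m; set r0 := sqrtC m in hr.
have hR : 'Re r0 \is Num.real by apply: Creal_Re.
case: (real_ltgt0P hR) => ha.
- by exists r0.
- exists (- r0); split; first by rewrite sqrrN.
  by rewrite raddfN /= oppr_gt0.
- exfalso; move: (hm ('Im r0) (Creal_Im _)); rewrite -hr.
  rewrite [X in X ^+ 2]Crect ha add0r exprMn sqrCi mulN1r eqxx //.
Qed.

Lemma realC (R : rcfType) (t : R[i]) : t \is Num.real -> exists s : R, t = rC s.
Proof.
case: t => a b; rewrite realE !lecE /= => /orP[] /andP[/eqP hb _]; exists a; by rewrite /rC hb.
Qed.

Theorem proposition4p3 (R : rcfType) (D beta delta alpha : R) (lam : R[i]) :
  (beta, D) != (0, 0) ->
  ~ sigma_ess D beta delta alpha lam ->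
  exists rs : seq R[i],
    char_poly (Ainf D beta delta alpha lam) = \prod_(z <- rs) ('X - z%:P)
    /\ count (fun z => 0 < Re z) rs = 2%N
    /\ count (fun z => Re z < 0) rs = 2%N.
Proof.
move=> hBD hnot.
have a1n0 : Complex beta (D/2) != 0.
  apply/negP => /eqP/eqP; rewrite eq_complex /= => /andP[/eqP b0 /eqP d0].
  move: hBD; rewrite b0 xpair_eqE eqxx /=; apply/negP/negPn.
  by move: d0 => /eqP; rewrite mulf_eq0 invr_eq0 pnatr_eq0 orbF.
have a2n0 : Complex beta (-(D/2)) != 0.
  apply/negP => /eqP/eqP; rewrite eq_complex /= => /andP[/eqP b0 /eqP d0].
  move: hBD; rewrite b0 xpair_eqE eqxx /=; apply/negP/negPn.
  by move: d0 => /eqP; rewrite oppr_eq0 mulf_eq0 invr_eq0 pnatr_eq0 orbF.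
have detB : \det (Bmx beta D) = Complex beta (D/2) * Complex beta (-(D/2)).
  rewrite det2 /Bmx /mx2 !mxE /= /rC; apply/eqP; rewrite eq_complex /=.
  apply/andP; split; apply/eqP; ring.
have Bu : Bmx beta D \in unitmx by rewrite unitmxE detB unitfE mulf_neq0.
have [r1 [r1sq r1pos]] : exists r : R[i], r ^+ 2 = (lam - Complex delta alpha) / Complex beta (D/2) /\ 0 < 'Re r.
  apply: sq => t /realC [s ->]; apply/negP => /eqP h; apply: hnot; exists s; left.
  have : lam - Complex delta alpha = - rC s ^+ 2 * Complex beta (D / 2) by rewrite -h divfK.
  have -> : rC (s ^+ 2) = rC s ^+ 2.
    by rewrite /rC expr2 /=; apply/eqP; rewrite eq_complex /= !mulr0 !mul0r subr0 addr0 !eqxx.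
  move=> e; rewrite -[lam](subrK (Complex delta alpha)) e; ring.
have [r2 [r2sq r2pos]] : exists r : R[i], r ^+ 2 = (lam - Complex delta (-alpha)) / Complex beta (-(D/2)) /\ 0 < 'Re r.
  apply: sq => t /realC [s ->]; apply/negP => /eqP h; apply: hnot; exists s; right.
  have : lam - Complex delta (-alpha) = - rC s ^+ 2 * Complex beta (-(D / 2)) by rewrite -h divfK.
  have -> : rC (s ^+ 2) = rC s ^+ 2.
    by rewrite /rC expr2 /=; apply/eqP; rewrite eq_complex /= !mulr0 !mul0r subr0 addr0 !eqxx.
  move=> e; rewrite -[lam](subrK (Complex delta (-alpha))) e; ring.
exists [:: r1; -r1; r2; -r2]; split.
  rewrite step1; apply: (@mulfI _ (\det (Bmx beta D))%:P).
    by rewrite polyC_eq0 detB mulf_neq0.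
  rewrite step2 // detB.
  have e1 : lam - Complex delta alpha = r1 ^+ 2 * Complex beta (D/2) by rewrite r1sq divfK.
  have e2 : lam - Complex delta (-alpha) = r2 ^+ 2 * Complex beta (-(D/2)) by rewrite r2sq divfK.
  rewrite e1 e2 !big_cons big_nil !rmorphM !rmorphN /= ?rmorphXn /=.
ring.
have ReN : forall z : R[i], 'Re (- z) = - 'Re z by move=> z; rewrite raddfN.
rewrite /= !ReN !oppr_gt0 !oppr_lt0 r1pos r2pos !(lt_gtF r1pos) !(lt_gtF r2pos).
by [].
Qed.
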